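(* Let $\mathbf{A}\in\mathbb{R}^{n\times d}$ have columns normalized so that $\mathrm{diag}(\mathbf{A}^T\mathbf{A})=\mathbf{1}$, let $\mathbf{y}\in\mathbb{R}^n$, $\lambda\ge 0$, and let $\hat{\mathbf{A}}=[\mathbf{A},\,-\mathbf{A}]\in\mathbb{R}^{n\times 2d}$. Consider the (duplicated-feature) Lasso objective $$F(\mathbf{x})=\tfrac12\lVert \hat{\mathbf{A}}\mathbf{x}-\mathbf{y}\rVert_2^2+\lambda\sum_{j=1}^{2d}x_j,\qquad \mathbf{x}\in\mathbb{R}^{2d}_+.$$ Fix $\mathbf{x}\in\mathbb{R}^{2d}_+$ and an integer $P\ge1$. Let $\mathcal{P}_t=\{i_1,\dots,i_P\}$ be a multiset of indices in $\{1,\dots,2d\}$ (as chosen in one iteration of Shotgun), for each $j$ let $\delta x_j=\max\{-x_j,\,-(\nabla F(\mathbf{x}))_j\}$ (the Shooting update with $\beta=1$), and let $\Delta\mathbf{x}\in\mathbb{R}^{2d}$ be the collective update $(\Delta\mathbf{x})_k=\sum_{i_j\in\mathcal{P}_t:\,i_j=k}\delta x_{i_j}$. Then $$F(\mathbf{x}+\Delta\mathbf{x})-F(\mathbf{x})\le -\tfrac12\sum_{i_j\in\mathcal{P}_t}(\delta x_{i_j})^2+\tfrac12\sum_{\substack{i_j,i_k\in\mathcal{P}_t\\ j\ne k}}(\hat{\mathbf{A}}^T\hat{\mathbf{A}})_{i_j,i_k}\,\delta x_{i_j}\,\delta x_{i_k}.$$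
   Context: Shotgun (parallel stochastic coordinate descent) starts at $\mathbf{x}=\mathbf{0}\in\mathbb{R}^{2d}_+$ and in each iteration chooses $P$ indices $i_1,\dots,i_P$ independently and uniformly at random from $\{1,\dots,2d\}$ (forming a multiset $\mathcal{P}_t$), computes for each chosen index $j$ the update $\delta x_j=\max\{-x_j,-(\nabla F(\mathbf{x}))_j/\beta\}$ at the current $\mathbf{x}$, and applies all of them simultaneously, giving the collective update $\Delta\mathbf{x}$. For the Lasso $\beta=1$. The matrix written $\mathbf{A}^T\mathbf{A}$ in the paper's statement is the Gram matrix of the (duplicated) design matrix indexing the $2d$ coordinates, here $\hat{\mathbf{A}}^T\hat{\mathbf{A}}$. *)

(* Defs.v *)
From HB Require Import structures.
From mathcomp Require Import all_boot all_order all_algebra.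
Set Implicit Arguments. Unset Strict Implicit. Unset Printing Implicit Defensive.
Import Order.TTheory GRing.Theory Num.Theory.
Local Open Scope ring_scope.

Section Lasso.
Variables (R : realFieldType) (n d : nat).
Implicit Types (A : 'M[R]_(n, d)) (y : 'cV[R]_n) (x : 'cV[R]_(d + d)).

Definition Ahat A : 'M[R]_(n, d + d) := row_mx A (- A).

Definition lassoF A y (lambda : R) x : R :=
  2^-1 * \sum_(i < n) ((Ahat A *m x - y) i 0) ^+ 2
  + lambda * \sum_(j < d + d) x j 0.

Definition lassoGrad A y (lambda : R) x : 'cV[R]_(d + d) :=
  (Ahat A)^T *m (Ahat A *m x - y) + const_mx lambda.

Definition shoot A y (lambda : R) x (j : 'I_(d + d)) : R :=
  Num.max (- x j 0) (- lassoGrad A y lambda x j 0).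

Definition shotgun_update A y (lambda : R) x (P : nat) (idx : 'I_P -> 'I_(d + d))
  : 'cV[R]_(d + d) :=
  \col_k \sum_(j < P | idx j == k) shoot A y lambda x (idx j).
End Lasso.

(* Main.v *)
Require Import Defs.
From HB Require Import structures.
From mathcomp Require Import all_boot all_order all_algebra.
From mathcomp Require Import ring lra.
Import Order.TTheory GRing.Theory Num.Theory.
Local Open Scope ring_scope.

Lemma sum_regroup (R : realFieldType) (N P : nat) (idx : 'I_P -> 'I_N)
  (f : 'I_N -> R) (s : 'I_P -> R) :
  \sum_(k < N) f k * \sum_(j < P | idx j == k) s j = \sum_(j < P) f (idx j) * s j.
Proof.
under eq_bigr => k _ do rewrite big_mkcond mulr_sumr.
rewrite exchange_big /=; apply: eq_bigr => j _.
rewrite (bigD1 (idx j)) //= eqxx big1 ?addr0 // => k /negPf Hk.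
by rewrite eq_sym Hk mulr0.
Qed.

Lemma shoot_ineq (R : realFieldType) (xv g : R) : 0 <= xv ->
  g * Num.max (- xv) (- g) <= - (Num.max (- xv) (- g)) ^+ 2.
Proof.
move=> hx; rewrite /Num.max; case: ifP => h.
  by rewrite expr2; lra.
have : - g <= - xv by rewrite leNgt h.
move=> h2; rewrite expr2; nra.
Qed.

Theorem theorem3p1 (R : realFieldType) (n d : nat) (A : 'M[R]_(n, d))
  (y : 'cV[R]_n) (lambda : R) (x : 'cV[R]_(d + d)) (P : nat)
  (idx : 'I_P -> 'I_(d + d)) :
  (forall j : 'I_d, (A^T *m A) j j = 1) ->
  0 <= lambda ->
  (forall j : 'I_(d + d), 0 <= x j 0) ->
  (0 < P)%N ->
  lassoF A y lambda (x + shotgun_update A y lambda x idx) - lassoF A y lambda x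
  <= - 2^-1 * \sum_(j < P) (shoot A y lambda x (idx j)) ^+ 2
     + 2^-1 * \sum_(j < P) \sum_(k < P | j != k)
          ((Ahat A)^T *m Ahat A) (idx j) (idx k)
          * shoot A y lambda x (idx j) * shoot A y lambda x (idx k).
Proof.
move=> hA hl hx _.
set s := fun j : 'I_P => shoot A y lambda x (idx j).
set Ah := Ahat A.
set v := Ah *m x - y.
set M := Ah^T *m Ah.
set D := shotgun_update A y lambda x idx.
have hD : forall k, D k 0 = \sum_(j < P | idx j == k) s j.
  by move=> k; rewrite /D /shotgun_update mxE.
have hM : forall a b, M a b = \sum_(i < n) Ah i a * Ah i b.
  by move=> a b; rewrite /M mxE; apply: eq_bigr => i _; rewrite mxE.
have hMd : forall a, M a a = 1.
  move=> a; rewrite hM; case: (split_ordP a) => a' ->.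
    rewrite -(hA a') mxE; apply: eq_bigr => i _.
    by rewrite /Ah /Ahat row_mxEl mxE.
  rewrite -(hA a') mxE; apply: eq_bigr => i _.
  by rewrite /Ah /Ahat row_mxEr !mxE mulrNN.
set w := fun i : 'I_n => \sum_(j < P) Ah i (idx j) * s j.
have hw : forall i, (Ah *m (x + D) - y) i 0 = v i 0 + w i.
  move=> i; rewrite mulmxDr (addrAC _ _ (- y)) -/v mxE; congr (_ + _).
  rewrite mxE /w -(@sum_regroup R _ _ idx (fun k => Ah i k)).
  by apply: eq_bigr => k _; rewrite hD.
set G := fun j : 'I_P => (Ah^T *m v) (idx j) 0.
have hsq : \sum_(i < n) ((Ah *m (x + D) - y) i 0) ^+ 2 =
   \sum_(i < n) (v i 0) ^+ 2 + 2 * \sum_(j < P) G j * s j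
   + \sum_(j < P) \sum_(k < P) M (idx j) (idx k) * s j * s k.
  have hcross : \sum_(i < n) v i 0 * w i = \sum_(j < P) G j * s j.
    under eq_bigr => i _ do rewrite /w mulr_sumr.
    rewrite exchange_big /=; apply: eq_bigr => j _.
    rewrite /G mxE mulr_suml; apply: eq_bigr => i _; rewrite [Ah^T _ _]mxE; ring.
  have hquad : \sum_(i < n) w i ^+ 2 = \sum_(j < P) \sum_(k < P) M (idx j) (idx k) * s j * s k.
    under eq_bigr => i _ do rewrite /w expr2 mulr_suml.
    under eq_bigr => i _ do under eq_bigr => j _ do rewrite mulr_sumr.
    rewrite exchange_big /=; apply: eq_bigr => j _.
    rewrite exchange_big /=; apply: eq_bigr => k _.
    rewrite hM !mulr_suml; apply: eq_bigr => i _; ring.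
  under eq_bigr => i _ do rewrite hw sqrrD.
  rewrite !big_split /= hcross hquad; ring.
have hlin : \sum_(k < d + d) (x + D) k 0 = \sum_(k < d + d) x k 0 + \sum_(j < P) s j.
  rewrite (_ : \sum_(j < P) s j = \sum_(j < P) (fun _ => (1:R)) (idx j) * s j); last first.
    by apply: eq_bigr => j _; rewrite mul1r.
  rewrite -(@sum_regroup R _ _ idx (fun _ => 1)) -big_split; apply: eq_bigr => k _.
  by rewrite mxE hD mul1r.
have hg : forall j, G j * s j <= - s j ^+ 2 - lambda * s j.
  move=> j; have := @shoot_ineq R (x (idx j) 0) (lassoGrad A y lambda x (idx j) 0) (hx (idx j)).
  rewrite /s /shoot /G /lassoGrad !mxE -/Ah -/v; lra.
have hdiag : \sum_(j < P) \sum_(k < P) M (idx j) (idx k) * s j * s k =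
   \sum_(j < P) s j ^+ 2 + \sum_(j < P) \sum_(k < P | j != k) M (idx j) (idx k) * s j * s k.
  rewrite -big_split; apply: eq_bigr => j _ /=.
  rewrite (bigD1 j) //= hMd mul1r expr2; congr (_ + _).
  by apply: eq_bigl => k; rewrite eq_sym.
have hsum : \sum_(j < P) G j * s j <= \sum_(j < P) (- s j ^+ 2 - lambda * s j).
  by apply: ler_sum => j _; exact: hg.
rewrite sumrB sumrN -mulr_sumr in hsum.
rewrite /lassoF -/Ah -/v hsq hlin hdiag.
set S1 := \sum_(j < P) s j ^+ 2.
set S2 := \sum_(j < P) G j * s j.
set S3 := \sum_(j < P) \sum_(k < P | j != k) _.
set S4 := \sum_(j < P) s j.
set S5 := \sum_(i < n) _.
set S6 := \sum_(k < d + d) _.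
move: hsum; rewrite -/S1 -/S2 -/S4.
lra.
Qed.
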